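(* Let $a \in \mathcal R$ and let $J_a^L, J_a^R$, $M$ and $N$ be as defined in the context. For each $\alpha \in J_a^L$ the map $T_\alpha$ satisfies $T_\alpha^M(\alpha) = T_\alpha^N(1-\alpha)$, and for each $\alpha \in J_a^R$ the map $T_\alpha$ satisfies $T_\alpha^{M+1}(\alpha) = T_\alpha^{N-1}(1-\alpha)$.
   Context: $[a_1,a_2,\ldots]$ denotes the (finite or infinite) regular continued fraction $\cfrac{1}{a_1+\cfrac{1}{a_2+\cdots}}$ and an overline denotes a periodically repeated block. For $\alpha \in (0,1)$ let $D_\alpha = \bigcup_{n \ge 1} \big[ \frac{1}{n+\alpha}, \frac1n \big]$, $D_\alpha^{\mathsf c} = [0,1]\setminus D_\alpha$, $I_\alpha = [\min\{\alpha,1-\alpha\},1]$, and $T_\alpha : I_\alpha \to I_\alpha$, $T_\alpha(x) = \frac1x - \lfloor \frac1x \rfloor$ if $x \in D_\alpha^{\mathsf c}$, $T_\alpha(x) = 1 + \lfloor \frac1x \rfloor - \frac1x$ if $x \in D_\alpha$. Let $g=\frac{\sqrt5-1}{2}$. Each rational $a\in\mathbb Q\cap(0,1)$ has two expansions $a=[a_1,\ldots,a_n]=[a_1,\ldots,a_n-1,1]$ with $a_n\ge2$; its quadratic interval $I_a$ is the open interval with endpoints $[\overline{a_1,\ldots,a_n}]$ and $[\overline{a_1,\ldots,a_n-1,1}]$, and $I_1 := (g,1)$. A quadratic interval is maximal if it is not properly contained in any other quadratic interval, and $\mathcal R = \{a \in \mathbb Q\cap(0,1] : I_a \text{ is maximal}\}$.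 For $a=[a_1,\ldots,a_n]\in\mathcal R\setminus\{1\}$ with $a_n\ge2$: if $n$ is odd, $J_a^L = ([1,\overline{a_1,\ldots,a_n-1,1}],[1,a_1,\ldots,a_n-1,1])$, $J_a^R = ([1,a_1,\ldots,a_n],[1,\overline{a_1,\ldots,a_n}])$, $M = a_1+a_3+\cdots+a_n$, $N = a_2+a_4+\cdots+a_{n-1}+2$; if $n$ is even, $J_a^L = ([1,\overline{a_1,\ldots,a_n}],[1,a_1,\ldots,a_n])$, $J_a^R = ([1,a_1,\ldots,a_n-1,1],[1,\overline{a_1,\ldots,a_n-1,1}])$, $M = a_1+a_3+\cdots+a_{n-1}+1$, $N = a_2+a_4+\cdots+a_n+1$. For $a=1$: $J_1^L=\emptyset$, $J_1^R=(\frac12,g)$, $M=1$, $N=2$. *)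

(* Defs.v *)
From Stdlib Require Import Reals Lra List ClassicalEpsilon QArith.
From Coquelicot Require Import Coquelicot.

Open Scope R_scope.

(* Finite continued fraction with a real tail:
   cf_tail [a1;...;an] x = 1/(a1 + 1/(a2 + ... 1/(an + x))). *)
Definition cf_tail (l : list nat) (x : R) : R :=
  fold_right (fun a y => / (INR a + y)) x l.

Definition cf_fin (l : list nat) : R := cf_tail l 0.

Definition cf_inf (s : nat -> nat) : R :=
  real (Lim_seq (fun n => cf_fin (map s (List.seq 0 n)))).

Definition cf_per (b : list nat) : R :=
  cf_inf (fun k => nth (Nat.modulo k (length b)) b 0%nat).

Definition valid_cf (l : list nat) : Prop :=
  l <> nil /\ List.Forall (fun a => (1 <= a)%nat) l /\ (2 <= last l 0)%nat.

Definition alt_cf (l : list nat) : list nat :=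
  removelast l ++ ((last l 0 - 1)%nat :: 1%nat :: nil).

Definition open_between (x y t : R) : Prop := Rmin x y < t < Rmax x y.

Definition gold : R := (sqrt 5 - 1) / 2.

Definition is_rat (a : R) : Prop := exists q : Q, Q2R q = a.

Definition quad_dom (a : R) : Prop := is_rat a /\ 0 < a <= 1.

Definition qint (a : R) (t : R) : Prop :=
  if Req_EM_T a 1 then gold < t < 1
  else exists l, valid_cf l /\ cf_fin l = a /\
         open_between (cf_per l) (cf_per (alt_cf l)) t.

Definition in_calR (a : R) : Prop :=
  quad_dom a /\
  forall b, quad_dom b ->
    (forall t, qint a t -> qint b t) -> (forall t, qint b t -> qint a t).

Definition cf1_fin (b : list nat) : R := cf_fin (1%nat :: b).
Definition cf1_per (b : list nat) : R := cf_tail (1%nat :: nil) (cf_per b).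

Definition JL (l : list nat) (t : R) : Prop :=
  if Nat.odd (length l)
  then open_between (cf1_per (alt_cf l)) (cf1_fin (alt_cf l)) t
  else open_between (cf1_per l) (cf1_fin l) t.

Definition JR (l : list nat) (t : R) : Prop :=
  if Nat.odd (length l)
  then open_between (cf1_fin l) (cf1_per l) t
  else open_between (cf1_fin (alt_cf l)) (cf1_per (alt_cf l)) t.

(* (sum of a1,a3,a5,..., sum of a2,a4,...) *)
Fixpoint sum_alt (l : list nat) : nat * nat :=
  match l with
  | nil => (0%nat, 0%nat)
  | a :: r => let (s1, s2) := sum_alt r in ((a + s2)%nat, s1)
  end.

Definition M_of (l : list nat) : nat :=
  if Nat.odd (length l) then fst (sum_alt l) else (fst (sum_alt l) + 1)%nat.

Definition N_of (l : list nat) : nat :=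
  if Nat.odd (length l) then (snd (sum_alt l) + 2)%nat else (snd (sum_alt l) + 1)%nat.

Definition inD (alpha x : R) : Prop :=
  exists n : nat, (1 <= n)%nat /\ / (INR n + alpha) <= x <= / INR n.

Definition flo (x : R) : R := IZR (Int_part x).

Definition T (alpha x : R) : R :=
  if excluded_middle_informative (inD alpha x)
  then 1 + flo (/ x) - / x
  else / x - flo (/ x).

Definition Titer (alpha : R) (k : nat) (x : R) : R := Nat.iter k (T alpha) x.

(* Main.v *)
Require Import Defs.
From Stdlib Require Import Reals List.
From Stdlib Require Import Lra Lia QArith Qreals ClassicalEpsilon.
From Coquelicot Require Import Coquelicot.
Open Scope R_scope.

Definition Dg (l : list nat) : Prop := List.Forall (fun a => (1 <= a)%nat) l.

Lemma cf_tail_nil x : cf_tail nil x = x.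
Proof. reflexivity. Qed.
Lemma cf_tail_cons a l x : cf_tail (a :: l) x = / (INR a + cf_tail l x).
Proof. reflexivity. Qed.
Lemma cf_tail_app l1 l2 x : cf_tail (l1 ++ l2) x = cf_tail l1 (cf_tail l2 x).
Proof. unfold cf_tail. now rewrite fold_right_app. Qed.

Lemma Dg_cons a l : Dg (a :: l) <-> (1 <= a)%nat /\ Dg l.
Proof. unfold Dg. split; intro H; [inversion H; auto | destruct H; constructor; auto]. Qed.
Lemma Dg_app l1 l2 : Dg (l1 ++ l2) <-> Dg l1 /\ Dg l2.
Proof. unfold Dg. rewrite List.Forall_app. tauto. Qed.

Lemma INR_ge1 a : (1 <= a)%nat -> 1 <= INR a.
Proof. intro H. apply le_INR in H. simpl in H. lra. Qed.

Lemma cf_nonneg l x : Dg l -> 0 <= x -> 0 <= cf_tail l x.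
Proof.
  induction l as [|a l IH]; intros HD Hx; simpl; auto.
  apply Dg_cons in HD as [Ha HD]. specialize (IH HD Hx).
  pose proof (INR_ge1 a Ha). left. apply Rinv_0_lt_compat. lra.
Qed.

Lemma cf_pos l x : Dg l -> 0 < x -> 0 < cf_tail l x.
Proof.
  induction l as [|a l IH]; intros HD Hx; simpl; auto.
  apply Dg_cons in HD as [Ha HD]. specialize (IH HD Hx).
  pose proof (INR_ge1 a Ha). apply Rinv_0_lt_compat. lra.
Qed.

Lemma cf_pos_ne l x : Dg l -> l <> nil -> 0 <= x -> 0 < cf_tail l x.
Proof.
  destruct l as [|a l]; intros HD Hne Hx; [congruence|].
  apply Dg_cons in HD as [Ha HD]. simpl. pose proof (cf_nonneg l x HD Hx).
  pose proof (INR_ge1 a Ha). apply Rinv_0_lt_compat. lra.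
Qed.

Lemma cf_le1 l x : Dg l -> l <> nil -> 0 <= x -> cf_tail l x <= 1.
Proof.
  destruct l as [|a l]; intros HD Hne Hx; [congruence|].
  apply Dg_cons in HD as [Ha HD]. simpl. pose proof (cf_nonneg l x HD Hx).
  pose proof (INR_ge1 a Ha). rewrite <- Rinv_1. apply Rinv_le_contravar; lra.
Qed.

Lemma cf_lt1 l x : Dg l -> l <> nil -> 0 < x -> cf_tail l x < 1.
Proof.
  destruct l as [|a l]; intros HD Hne Hx; [congruence|].
  apply Dg_cons in HD as [Ha HD]. simpl. pose proof (cf_pos l x HD Hx).
  pose proof (INR_ge1 a Ha). rewrite <- Rinv_1. apply Rinv_lt_contravar; lra.
Qed.


Lemma cf_le_first a l x : (1 <= a)%nat -> Dg l -> 0 <= x -> cf_tail (a :: l) x <= / INR a.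
Proof.
  intros Ha HD Hx. simpl. pose proof (cf_nonneg l x HD Hx).
  pose proof (INR_ge1 a Ha). apply Rinv_le_contravar; lra.
Qed.

Lemma cf_mono l x y : Dg l -> 0 <= x -> x < y ->
  (Nat.even (length l) = true -> cf_tail l x < cf_tail l y) /\
  (Nat.even (length l) = false -> cf_tail l y < cf_tail l x).
Proof.
  induction l as [|a l IH]; intros HD Hx Hxy.
  - simpl. split; intro H; [lra | discriminate].
  - apply Dg_cons in HD as [Ha HD]. destruct (IH HD Hx Hxy) as [I1 I2].
    pose proof (INR_ge1 a Ha). pose proof (cf_nonneg l x HD Hx).
    pose proof (cf_nonneg l y HD (ltac:(lra) : 0 <= y)).
    rewrite !cf_tail_cons. change (length (a :: l)) with (S (length l)).
    rewrite Nat.even_succ, <- Nat.negb_even.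
    destruct (Nat.even (length l)); simpl; split; intro E; try discriminate.
    + specialize (I1 eq_refl). apply Rinv_lt_contravar; [apply Rmult_lt_0_compat|]; lra.
    + specialize (I2 eq_refl). apply Rinv_lt_contravar; [apply Rmult_lt_0_compat|]; lra.
Qed.

Definition btw (a b c : R) : Prop := (a < c < b) \/ (b < c < a).

Lemma btw_sym a b c : btw a b c -> btw b a c.
Proof. unfold btw; tauto. Qed.

Lemma open_between_btw x y t : open_between x y t <-> btw x y t.
Proof.
  unfold open_between, btw, Rmin, Rmax.
  destruct (Rle_dec x y); split; intro H; lra.
Qed.

(* strict monotone maps preserve and reflect betweenness *)
Lemma cf_btw l x y z : Dg l -> 0 <= x -> 0 <= y -> 0 <= z ->
  (btw x y z <-> btw (cf_tail l x) (cf_tail l y) (cf_tail l z)).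
Proof.
  intros HD Hx Hy Hz.
  assert (M : forall u v, 0 <= u -> u < v ->
     (Nat.even (length l) = true -> cf_tail l u < cf_tail l v) /\
     (Nat.even (length l) = false -> cf_tail l v < cf_tail l u))
   by (intros; apply cf_mono; auto).
  unfold btw.
  destruct (Nat.even (length l)) eqn:E.
  - assert (Mi : forall u v, 0 <= u -> u < v -> cf_tail l u < cf_tail l v)
      by (intros u v Hu Huv; apply (M u v Hu Huv); auto).
    assert (Mr : forall u v, 0 <= u -> 0 <= v -> cf_tail l u < cf_tail l v -> u < v).
    { intros u v Hu Hv H. destruct (Rtotal_order u v) as [h|[h|h]]; auto.
      - subst; lra.
      - pose proof (Mi v u Hv h); lra. }
    split; intros [[h1 h2]|[h1 h2]].
    + left; split; apply Mi; auto.
    + right; split; apply Mi; auto.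
    + left; split; apply Mr; auto.
    + right; split; apply Mr; auto.
  - assert (Mi : forall u v, 0 <= u -> u < v -> cf_tail l v < cf_tail l u)
      by (intros u v Hu Huv; apply (M u v Hu Huv); auto).
    assert (Mr : forall u v, 0 <= u -> 0 <= v -> cf_tail l v < cf_tail l u -> u < v).
    { intros u v Hu Hv H. destruct (Rtotal_order u v) as [h|[h|h]]; auto.
      - subst; lra.
      - pose proof (Mi v u Hv h); lra. }
    split; intros [[h1 h2]|[h1 h2]].
    + right; split; apply Mi; auto.
    + left; split; apply Mi; auto.
    + right; split; apply Mr; auto.
    + left; split; apply Mr; auto.
Qed.

Lemma cf_inj l x y : Dg l -> 0 <= x -> 0 <= y -> cf_tail l x = cf_tail l y -> x = y.
Proof.
  intros HD Hx Hy H. destruct (Rtotal_order x y) as [h|[h|h]]; auto.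
  - destruct (cf_mono l x y HD Hx h) as [A B]. destruct (Nat.even (length l)); [specialize (A eq_refl)|specialize (B eq_refl)]; lra.
  - destruct (cf_mono l y x HD Hy h) as [A B]. destruct (Nat.even (length l)); [specialize (A eq_refl)|specialize (B eq_refl)]; lra.
Qed.

Lemma cf_ivt l s t x : Dg l -> 0 <= s -> s < t ->
  btw (cf_tail l s) (cf_tail l t) x -> exists y, s < y < t /\ cf_tail l y = x.
Proof.
  revert x. induction l as [|a l IH]; intros x HD Hs Hst Hb.
  - simpl in Hb. exists x. split; [unfold btw in Hb; lra | reflexivity].
  - apply Dg_cons in HD as [Ha HD]. simpl in Hb.
    pose proof (INR_ge1 a Ha).
    pose proof (cf_nonneg l s HD Hs). pose proof (cf_nonneg l t HD ltac:(lra)).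
    set (A := cf_tail l s) in *. set (B := cf_tail l t) in *.
    assert (Hx : 0 < x).
    { unfold btw in Hb. assert (0 < / (INR a + A)) by (apply Rinv_0_lt_compat; lra).
      assert (0 < / (INR a + B)) by (apply Rinv_0_lt_compat; lra). lra. }
    assert (Hb' : btw A B (/ x - INR a)).
    { unfold btw in *.
      destruct Hb as [[h1 h2]|[h1 h2]].
      - right. split.
        + apply Rinv_lt_contravar in h2; [|apply Rmult_lt_0_compat; auto; apply Rinv_0_lt_compat; lra].
          rewrite Rinv_inv in h2. lra.
        + apply Rinv_lt_contravar in h1; [|apply Rmult_lt_0_compat; auto; apply Rinv_0_lt_compat; lra].
          rewrite Rinv_inv in h1. lra.
      - left. split.
        + apply Rinv_lt_contravar in h2; [|apply Rmult_lt_0_compat; auto; apply Rinv_0_lt_compat; lra].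
          rewrite Rinv_inv in h2. lra.
        + apply Rinv_lt_contravar in h1; [|apply Rmult_lt_0_compat; auto; apply Rinv_0_lt_compat; lra].
          rewrite Rinv_inv in h1. lra. }
    destruct (IH _ HD Hs Hst Hb') as [y [Hy Hy']].
    exists y. split; auto. simpl. rewrite Hy'. replace (INR a + (/ x - INR a)) with (/ x) by ring.
    apply Rinv_inv.
Qed.

Fixpoint mob (l : list nat) : R * R * R * R :=
  match l with
  | nil => (1, 0, 0, 1)
  | a :: l' => let '(p, q, r, s) := mob l' in (r, s, INR a * r + p, INR a * s + q)
  end.

Lemma mob_prop l : Dg l -> let '(p, q, r, s) := mob l in
  0 <= p /\ 0 <= q /\ 0 <= r /\ 1 <= s /\ 1 <= p + r /\ (l <> nil -> 1 <= r /\ 1 <= q) /\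
  forall x, 0 <= x -> cf_tail l x = (p * x + q) / (r * x + s).
Proof.
  induction l as [|a l IH]; intro HD.
  - simpl. repeat split; try lra; try congruence. intros x _. field.
  - apply Dg_cons in HD as [Ha HD]. specialize (IH HD). simpl.
    destruct (mob l) as [[[p q] r] s].
    destruct IH as (Hp & Hq & Hr & Hs & Hpr & Hne & Hf).
    pose proof (INR_ge1 a Ha).
    assert (1 <= INR a * r + p) by nra.
    repeat split; try nra.
    intros x Hx. rewrite Hf by auto.
    assert (0 < r * x + s) by nra.
    field. split; nra.
Qed.

Definition ee (l : list nat) : R :=
  let '(p, q, r, s) := mob l in ((p - s) + sqrt ((p - s) ^ 2 + 4 * r * q)) / (2 * r).

Lemma ee_prop l : Dg l -> l <> nil ->
  0 < ee l /\ (forall x, 0 <= x -> (x < cf_tail l x <-> x < ee l) /\ (cf_tail l x = x <-> x = ee l)).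
Proof.
  intros HD Hne. pose proof (mob_prop l HD) as M. unfold ee.
  destruct (mob l) as [[[p q] r] s].
  destruct M as (Hp & Hq & Hr & Hs & Hpr & Hne' & Hf).
  destruct (Hne' Hne) as [Hr1 Hq1].
  set (dl := (p - s) ^ 2 + 4 * r * q).
  assert (Hdl : 0 <= dl) by (unfold dl; pose proof (pow2_ge_0 (p - s)); pose proof (Rmult_le_pos r q Hr Hq); nra).
  set (sq := sqrt dl).
  assert (Hsq : sq * sq = dl) by (apply sqrt_sqrt; auto).
  assert (Hsq0 : 0 <= sq) by apply sqrt_pos.
  assert (Hsq1 : p - s < sq /\ s - p < sq).
  { unfold dl in Hsq. assert (4 * r * q >= 4) by nra.
    assert (Hps : (p - s) ^ 2 = (p - s) * (p - s)) by ring.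
    split.
    - destruct (Rlt_le_dec (p - s) sq) as [h|h]; auto. exfalso.
      assert (sq * sq <= (p - s) * (p - s)) by (apply Rmult_le_compat; lra). nra.
    - destruct (Rlt_le_dec (s - p) sq) as [h|h]; auto. exfalso.
      assert (sq * sq <= (s - p) * (s - p)) by (apply Rmult_le_compat; lra). nra. }
  set (e := (p - s + sq) / (2 * r)).
  set (e' := (p - s - sq) / (2 * r)).
  assert (He : 0 < e) by (unfold e; apply Rdiv_lt_0_compat; lra).
  assert (He' : e' < 0).
  { unfold e'. assert (0 < / (2 * r)) by (apply Rinv_0_lt_compat; lra).
    unfold Rdiv. assert (p - s - sq < 0) by lra. nra. }
  assert (Key : forall x, p * x + q - x * (r * x + s) = - r * (x - e) * (x - e')).
  { intro x. unfold e, e'. field_simplify; [|lra]. unfold dl in Hsq.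
    replace (sq ^ 2) with (sq * sq) by ring. rewrite Hsq. field. lra. }
  split; [exact He|].
  intros x Hx. rewrite Hf by auto.
  assert (Hden : 0 < r * x + s) by nra.
  assert (Eq : (p * x + q) / (r * x + s) - x = (- r * (x - e) * (x - e')) / (r * x + s)).
  { rewrite <- Key. field. lra. }
  split; split; intro H.
  - assert (H0 : 0 < (- r * (x - e) * (x - e')) / (r * x + s)) by lra.
    assert (H1 : 0 < - r * (x - e) * (x - e')).
    { replace (- r * (x - e) * (x - e')) with (((- r * (x - e) * (x - e')) / (r * x + s)) * (r * x + s)) by (field; lra).
      apply Rmult_lt_0_compat; lra. }
    assert (H2 : (x - e) * (x - e') < 0) by nra.
    destruct (Rlt_le_dec x e); auto. assert (0 <= (x - e) * (x - e')) by (apply Rmult_le_pos; lra). lra.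
  - assert (0 < (- r * (x - e) * (x - e')) / (r * x + s)).
    { apply Rdiv_lt_0_compat; auto. assert (0 < (e - x) * (x - e')) by (apply Rmult_lt_0_compat; lra). nra. }
    lra.
  - assert ((- r * (x - e) * (x - e')) / (r * x + s) = 0) by lra.
    assert (- r * (x - e) * (x - e') = 0).
    { apply (Rmult_eq_reg_r (/ (r * x + s))). rewrite Rmult_0_l. exact H0.
      apply Rinv_neq_0_compat. lra. }
    apply Rmult_integral in H1 as [H1|H1]; [apply Rmult_integral in H1 as [H1|H1]|]; lra.
  - subst x. apply Rminus_diag_uniq. rewrite Eq. replace (e - e) with 0 by ring.
    unfold Rdiv. ring.
Qed.

Lemma ee_fix l : Dg l -> l <> nil -> cf_tail l (ee l) = ee l.
Proof.
  intros HD Hne. destruct (ee_prop l HD Hne) as [H0 H]. destruct (H (ee l)) as [_ [_ E]]; [lra|].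
  apply E. reflexivity.
Qed.

Lemma ee_pos l : Dg l -> l <> nil -> 0 < ee l.
Proof. intros HD Hne. apply (proj1 (ee_prop l HD Hne)). Qed.

Lemma ee_lt1 l : Dg l -> l <> nil -> ee l < 1.
Proof.
  intros HD Hne. rewrite <- (ee_fix l HD Hne). apply cf_lt1; auto. apply ee_pos; auto.
Qed.

Lemma ee_lt l x : Dg l -> l <> nil -> 0 <= x -> (x < cf_tail l x <-> x < ee l).
Proof. intros HD Hne Hx. apply (proj2 (ee_prop l HD Hne) x Hx). Qed.

Lemma ee_unique l x : Dg l -> l <> nil -> 0 <= x -> cf_tail l x = x -> x = ee l.
Proof. intros HD Hne Hx. apply (proj2 (ee_prop l HD Hne) x Hx). Qed.

Lemma ee_gt l x : Dg l -> l <> nil -> 0 <= x -> (cf_tail l x < x <-> ee l < x).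
Proof.
  intros HD Hne Hx. pose proof (ee_lt l x HD Hne Hx) as A. pose proof (ee_unique l x HD Hne Hx) as B.
  pose proof (ee_fix l HD Hne) as C.
  split; intro K.
  - destruct (Rtotal_order (ee l) x) as [h|[h|h]]; auto.
    + subst. lra.
    + apply A in h. lra.
  - destruct (Rtotal_order (cf_tail l x) x) as [h|[h|h]]; auto.
    + apply B in h. lra.
    + apply A in h. lra.
Qed.

Lemma cf_le1' U x : Dg U -> 0 <= x <= 1 -> 0 <= cf_tail U x <= 1.
Proof.
  intros HD Hx. split; [apply cf_nonneg; [auto|lra]|].
  destruct U as [|a U]; [simpl; lra|]. apply cf_le1; auto; [congruence|lra].
Qed.

Lemma cf_contr U x y : Dg U -> 0 <= x <= 1 -> 0 <= y <= 1 ->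
  Rabs (cf_tail U x - cf_tail U y) <= 2 * (/ 2) ^ (length U).
Proof.
  intros HD Hx Hy.
  remember (length U) as n eqn:En. revert U En HD.
  induction n as [n IH] using (well_founded_induction Wf_nat.lt_wf).
  intros U En HD.
  destruct U as [|a [|b U]].
  - simpl in *. subst. simpl. apply Rabs_le. lra.
  - simpl in En. subst. simpl. apply Dg_cons in HD as [Ha _].
    pose proof (INR_ge1 a Ha).
    assert (0 < / (INR a + x) <= 1).
    { split. apply Rinv_0_lt_compat; lra. rewrite <- Rinv_1. apply Rinv_le_contravar; lra. }
    assert (0 < / (INR a + y) <= 1).
    { split. apply Rinv_0_lt_compat; lra. rewrite <- Rinv_1. apply Rinv_le_contravar; lra. }
    apply Rabs_le. lra.
  - apply Dg_cons in HD as [Ha HD]. apply Dg_cons in HD as [Hb HD].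
    simpl in En. subst n.
    assert (IH' : Rabs (cf_tail U x - cf_tail U y) <= 2 * (/ 2) ^ length U)
      by (apply (IH (length U)); auto; lia).
    pose proof (cf_le1' U x HD Hx) as Ux. pose proof (cf_le1' U y HD Hy) as Uy.
    set (u := cf_tail U x) in *. set (v := cf_tail U y) in *.
    pose proof (INR_ge1 a Ha). pose proof (INR_ge1 b Hb).
    simpl. fold u v.
    set (A := INR a) in *. set (B := INR b) in *.
    assert (E : / (A + / (B + u)) - / (A + / (B + v)) = (u - v) / ((A * (B + u) + 1) * (A * (B + v) + 1))).
    { field. repeat split; try nra. }
    rewrite E. unfold Rdiv. rewrite Rabs_mult.
    assert (Hd : 4 <= (A * (B + u) + 1) * (A * (B + v) + 1)).
    { assert (2 <= A * (B + u) + 1) by nra. assert (2 <= A * (B + v) + 1) by nra. nra. }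
    rewrite Rabs_Rinv by lra. rewrite (Rabs_right ((A * (B + u) + 1) * (A * (B + v) + 1))) by lra.
    assert (Hi : 0 < / ((A * (B + u) + 1) * (A * (B + v) + 1)) <= / 4).
    { split. apply Rinv_0_lt_compat; lra. apply Rinv_le_contravar; lra. }
    pose proof (Rabs_pos (u - v)).
    assert (K : Rabs (u - v) * / ((A * (B + u) + 1) * (A * (B + v) + 1)) <= (2 * (/ 2) ^ length U) * / 4).
    { apply Rmult_le_compat; [lra | lra | exact IH' | lra]. }
    eapply Rle_trans; [exact K|]. right. simpl. field.
Qed.

Lemma skipn_nth_cons {A} (d : A) i (W : list A) : (i < length W)%nat ->
  skipn i W = nth i W d :: skipn (S i) W.
Proof.
  revert i. induction W as [|a W IH]; intros i Hi; simpl in Hi; [lia|].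
  destruct i; simpl; auto. apply IH. lia.
Qed.

Lemma Dg_nth W i : Dg W -> (i < length W)%nat -> (1 <= nth i W 0)%nat.
Proof.
  intros HD Hi. unfold Dg in HD. rewrite List.Forall_forall in HD. apply HD. apply nth_In. auto.
Qed.

Lemma Dg_skipn k W : Dg W -> Dg (skipn k W).
Proof. intro H. rewrite <- (firstn_skipn k W) in H. apply Dg_app in H. tauto. Qed.
Lemma Dg_firstn k W : Dg W -> Dg (firstn k W).
Proof. intro H. rewrite <- (firstn_skipn k W) in H. apply Dg_app in H. tauto. Qed.

Lemma cf_per_ee W : Dg W -> W <> nil -> cf_per W = ee W.
Proof.
  intros HD Hne.
  set (m := length W).
  assert (Hm : (0 < m)%nat) by (unfold m; destruct W; simpl; [congruence|lia]).
  set (s := fun k => nth (Nat.modulo k m) W 0%nat).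
  set (e := ee W).
  set (t := fun r => cf_tail (skipn (Nat.modulo r m) W) e).
  assert (Ht : forall r, t r = / (INR (s r) + t (S r))).
  { intro r. unfold t, s.
    assert (Hi : (r mod m < m)%nat) by (apply Nat.mod_upper_bound; lia).
    rewrite (skipn_nth_cons 0%nat) by exact Hi. rewrite cf_tail_cons. f_equal. f_equal.
    replace (S r) with (r + 1)%nat by lia.
    rewrite <- Nat.Div0.add_mod_idemp_l.
    revert Hi. generalize (r mod m). intros i Hi.
    destruct (Nat.eq_dec (S i) m) as [E|E].
    - replace (i + 1)%nat with m by lia. rewrite Nat.Div0.mod_same.
      rewrite E. unfold m. rewrite skipn_all. simpl. unfold e. symmetry. apply ee_fix; auto.
    - rewrite Nat.mod_small by lia. f_equal. f_equal. lia. }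
  assert (Hrec : forall n r, cf_tail (map s (seq r n)) (t (r + n)%nat) = t r).
  { induction n as [|n IHn]; intro r.
    - simpl. rewrite Nat.add_0_r. reflexivity.
    - simpl. rewrite (Ht r). f_equal. f_equal. replace (r + S n)%nat with (S r + n)%nat by lia.
      apply IHn. }
  assert (Hs : forall n, Dg (map s (seq 0 n))).
  { intro n. unfold Dg. rewrite List.Forall_forall. intros x Hx. apply in_map_iff in Hx as [k [<- _]].
    unfold s. apply Dg_nth; auto. apply Nat.mod_upper_bound. lia. }
  assert (He : 0 < e < 1) by (split; [apply ee_pos|apply ee_lt1]; auto).
  assert (Htb : forall r, 0 <= t r <= 1).
  { intro r. unfold t. apply cf_le1'; [apply Dg_skipn; auto|lra]. }
  assert (Hb : forall n, Rabs (cf_fin (map s (seq 0 n)) - e) <= 2 * (/ 2) ^ n).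
  { assert (Ht0 : t 0%nat = e).
    { unfold t. rewrite Nat.Div0.mod_0_l. simpl. apply ee_fix; auto. }
    intro n. unfold cf_fin. rewrite <- Ht0, <- (Hrec n 0%nat). simpl (0 + n)%nat.
    replace (2 * (/ 2) ^ n) with (2 * (/ 2) ^ (length (map s (seq 0 n))))
      by (rewrite length_map, length_seq; reflexivity).
    apply cf_contr; auto. lra. }
  assert (Hlim : is_lim_seq (fun n => cf_fin (map s (seq 0 n))) e).
  { apply is_lim_seq_le_le with (u := fun n => e - 2 * (/ 2) ^ n) (w := fun n => e + 2 * (/ 2) ^ n).
    - intro n. specialize (Hb n). apply Rabs_le_between in Hb. lra.
    - assert (G : is_lim_seq (fun n => 2 * (/ 2) ^ n) 0).
      { replace (Finite 0) with (Rbar_mult 2 0) by (simpl; f_equal; ring).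
        apply is_lim_seq_scal_l. apply is_lim_seq_geom. rewrite Rabs_right; lra. }
      pose proof (is_lim_seq_minus' _ _ e 0 (is_lim_seq_const e) G) as H.
      replace (e - 0) with e in H by ring. exact H.
    - assert (G : is_lim_seq (fun n => 2 * (/ 2) ^ n) 0).
      { replace (Finite 0) with (Rbar_mult 2 0) by (simpl; f_equal; ring).
        apply is_lim_seq_scal_l. apply is_lim_seq_geom. rewrite Rabs_right; lra. }
      pose proof (is_lim_seq_plus' _ _ e 0 (is_lim_seq_const e) G) as H.
      replace (e + 0) with e in H by ring. exact H. }
  unfold cf_per, cf_inf. fold m. fold s. rewrite (is_lim_seq_unique _ _ Hlim). reflexivity.
Qed.

Lemma Dg_skipn' k W : Dg W -> Dg (skipn k W).
Proof. intro H. rewrite <- (firstn_skipn k W) in H. apply Dg_app in H. tauto. Qed.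

Lemma flo_nat c f : 0 <= f < 1 -> flo (INR c + f) = INR c.
Proof.
  intro Hf. unfold flo. rewrite <- (Int_part_spec (INR c + f) (Z.of_nat c)).
  - symmetry. apply INR_IZR_INZ.
  - rewrite <- INR_IZR_INZ. lra.
Qed.

Lemma T_val a c f : 0 < a < 1 -> (1 <= c)%nat -> 0 <= f < 1 ->
  T a (/ (INR c + f)) = (if Rle_dec f a then 1 - f else f).
Proof.
  intros Ha Hc Hf. pose proof (INR_ge1 c Hc) as Hc'.
  unfold T. rewrite Rinv_inv. rewrite flo_nat by auto.
  destruct (excluded_middle_informative (inD a (/ (INR c + f)))) as [I|I];
  destruct (Rle_dec f a) as [L|L].
  - ring.
  - exfalso. destruct I as [n [Hn [I1 I2]]]. pose proof (INR_ge1 n Hn).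
    apply Rinv_le_contravar in I1; [|apply Rinv_0_lt_compat; lra]. rewrite !Rinv_inv in I1.
    apply Rinv_le_contravar in I2; [|apply Rinv_0_lt_compat; lra]. rewrite !Rinv_inv in I2.
    assert (INR n < INR (c + 1)) by (rewrite plus_INR; simpl; lra).
    assert (INR c < INR n) by lra.
    apply INR_lt in H0. apply INR_lt in H1. lia.
  - exfalso. apply I. exists c. split; auto. split.
    + apply Rinv_le_contravar; lra.
    + apply Rinv_le_contravar; lra.
  - ring.
Qed.

Lemma T_flip a c f : 0 < a < 1 -> (1 <= c)%nat -> 0 <= f < 1 -> f <= a ->
  T a (/ (INR c + f)) = 1 - f.
Proof. intros. rewrite T_val by auto. destruct (Rle_dec f a); lra. Qed.

Lemma T_noflip a c f : 0 < a < 1 -> (1 <= c)%nat -> 0 <= f < 1 -> a < f ->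
  T a (/ (INR c + f)) = f.
Proof. intros. rewrite T_val by auto. destruct (Rle_dec f a); lra. Qed.

Lemma Titer_S a n x : Titer a (S n) x = Titer a n (T a x).
Proof. unfold Titer. apply Nat.iter_succ_r. Qed.
Lemma Titer_add a n m x : Titer a (n + m) x = Titer a n (Titer a m x).
Proof. unfold Titer. apply Nat.iter_add. Qed.
Lemma Titer_0 a x : Titer a 0 x = x.
Proof. reflexivity. Qed.

Lemma step_reduce a tau c d L : 1/2 < a < 1 -> 0 < tau -> (1 <= c)%nat -> (2 <= d)%nat -> Dg L ->
  T a (cf_tail (c :: d :: L) tau) = cf_tail (1%nat :: (d - 1)%nat :: L) tau.
Proof.
  intros Ha Ht Hc Hd HL. rewrite cf_tail_cons.
  pose proof (cf_pos L tau HL Ht) as Hy. set (y := cf_tail L tau) in *.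
  assert (Hd' : 2 <= INR d) by (apply le_INR in Hd; simpl in Hd; lra).
  assert (Hf : 0 <= cf_tail (d :: L) tau <= 1/2).
  { rewrite cf_tail_cons. fold y. split. left; apply Rinv_0_lt_compat; lra.
    replace (1/2) with (/ 2) by field. apply Rinv_le_contravar; lra. }
  rewrite T_flip; auto; try lra.
  rewrite !cf_tail_cons. fold y. rewrite minus_INR by lia. simpl. field. split; lra.
Qed.

Lemma step_flip1 a tau c e L : 0 < a < 1 -> 0 < tau -> (1 <= c)%nat -> (1 <= e)%nat -> Dg L ->
  cf_tail (1%nat :: e :: L) tau <= a ->
  T a (cf_tail (c :: 1%nat :: e :: L) tau) = cf_tail ((e + 1)%nat :: L) tau.
Proof.
  intros Ha Ht Hc He HL Hcmp. rewrite (cf_tail_cons c).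
  pose proof (cf_pos L tau HL Ht) as Hy.
  assert (He' := INR_ge1 e He).
  assert (Hf : 0 <= cf_tail (1%nat :: e :: L) tau < 1).
  { split. apply cf_nonneg. repeat constructor; auto. lra.
    apply cf_lt1; [repeat constructor; auto|congruence|lra]. }
  rewrite T_flip; auto; try lra.
  rewrite !cf_tail_cons. set (y := cf_tail L tau) in *. rewrite plus_INR. simpl.
  assert (0 < / (INR e + y)) by (apply Rinv_0_lt_compat; lra).
  field. repeat split; try lra.
Qed.

Lemma step_noflip_end a tau c : 0 < a < 1 -> 0 < tau -> (1 <= c)%nat ->
  a < cf_tail (1%nat :: nil) tau ->
  T a (cf_tail (c :: 1%nat :: nil) tau) = cf_tail (1%nat :: nil) tau.
Proof.
  intros Ha Ht Hc Hcmp. rewrite (cf_tail_cons c).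
  assert (Hf : 0 <= cf_tail (1%nat :: nil) tau < 1).
  { split. apply cf_nonneg. repeat constructor; auto. lra.
    apply cf_lt1; [repeat constructor; auto|congruence|lra]. }
  rewrite T_noflip; auto.
Qed.

Lemma step_end a tau c : 0 < a < 1 -> 0 < tau < 1 -> (1 <= c)%nat -> tau <= a ->
  T a (cf_tail (c :: nil) tau) = 1 - tau.
Proof.
  intros Ha Ht Hc Hcmp. rewrite (cf_tail_cons c). simpl. rewrite T_flip; auto; lra.
Qed.

Lemma consume a tau e L : 1/2 < a < 1 -> 0 < tau -> (1 <= e)%nat -> Dg L ->
  cf_tail (1%nat :: e :: L) tau <= a ->
  forall d c, (1 <= d)%nat -> (1 <= c)%nat ->
  Titer a d (cf_tail (c :: d :: e :: L) tau) = cf_tail ((e + 1)%nat :: L) tau.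
Proof.
  intros Ha Ht He HL Hcmp d. induction d as [|d IH]; intros c Hd Hc; [lia|].
  destruct (Nat.eq_dec d 0) as [->|Hd0].
  - rewrite Titer_S, Titer_0. apply step_flip1; auto. lra.
  - rewrite Titer_S. rewrite step_reduce; auto; try lia.
    + replace (S d - 1)%nat with d by lia. apply IH; lia.
    + repeat constructor; auto.
Qed.

Lemma end_odd a tau : 1/2 < a < 1 -> 0 < tau < 1 -> a < cf_tail (1%nat :: nil) tau -> tau <= a ->
  forall d c, (1 <= d)%nat -> (1 <= c)%nat ->
  Titer a (d + 1) (cf_tail (c :: d :: nil) tau) = 1 - tau.
Proof.
  intros Ha Ht Hcmp Hta d. induction d as [|d IH]; intros c Hd Hc; [lia|].
  destruct (Nat.eq_dec d 0) as [->|Hd0].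
  - simpl (1 + 1)%nat. rewrite Titer_S. rewrite step_noflip_end; auto; try lra.
    rewrite Titer_S, Titer_0. apply step_end; auto; lra.
  - replace (S d + 1)%nat with (S (d + 1)) by lia. rewrite Titer_S. rewrite step_reduce; auto; try lia; try lra.
    + replace (S d - 1)%nat with d by lia. apply IH; lia.
    + constructor.
Qed.

Lemma fst_sum_alt2 d e R : fst (sum_alt (d :: e :: R)) = (d + fst (sum_alt R))%nat.
Proof. simpl. destruct (sum_alt R). reflexivity. Qed.
Lemma snd_sum_alt1 d R : snd (sum_alt (d :: R)) = fst (sum_alt R).
Proof. simpl. destruct (sum_alt R). reflexivity. Qed.
Lemma fst_sum_alt1 d : fst (sum_alt (d :: nil)) = d.
Proof. simpl. lia. Qed.

Lemma orbit a tau : 1/2 < a < 1 -> 0 < tau < 1 -> a < cf_tail (1%nat :: nil) tau -> tau <= a ->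
  forall n L, (length L <= n)%nat -> Dg L ->
  (forall i, (1 <= i < length L)%nat -> cf_tail (1%nat :: skipn i L) tau <= a) ->
  forall c, (1 <= c)%nat -> Titer a (fst (sum_alt L) + 1) (cf_tail (c :: L) tau) = 1 - tau.
Proof.
  intros Ha Ht Hcmp Hta n. induction n as [|n IH]; intros L Hn HL Hi c Hc.
  - destruct L; simpl in Hn; [|lia]. simpl (fst (sum_alt nil) + 1)%nat. rewrite Titer_S, Titer_0. apply step_end; auto; lra.
  - destruct L as [|d [|e R]].
    + simpl (fst (sum_alt nil) + 1)%nat. rewrite Titer_S, Titer_0. apply step_end; auto; lra.
    + rewrite fst_sum_alt1. apply Dg_cons in HL as [Hd _]. apply end_odd; auto.
    + apply Dg_cons in HL as [Hd HL]. apply Dg_cons in HL as [He HR].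
      rewrite fst_sum_alt2. replace (d + fst (sum_alt R) + 1)%nat with ((fst (sum_alt R) + 1) + d)%nat by lia.
      rewrite Titer_add. rewrite consume; auto; try lra; try lia.
      * apply IH; auto; try (simpl in Hn; lia); try lia.
        intros i Hi'. specialize (Hi (i + 2)%nat). simpl length in Hi.
        replace (skipn (i + 2) (d :: e :: R)) with (skipn i R) in Hi by (replace (i + 2)%nat with (S (S i)) by lia; reflexivity).
        apply Hi. lia.
      * specialize (Hi 1%nat). simpl in Hi. apply Hi. lia.
Qed.

Lemma orbit_main W a tau : Dg W -> W <> nil -> 0 < tau -> tau < ee W ->
  a = cf_tail (1%nat :: W) tau -> tau <= a ->
  (forall k, (1 <= k < length W)%nat -> cf_tail W tau <= cf_tail (skipn k W) tau) ->
  Titer a (fst (sum_alt W) + 1) a = 1 - tau /\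
  Titer a (snd (sum_alt W) + 1) (1 - a) = 1 - tau.
Proof.
  intros HD Hne Ht Hte Ha Hta Hk.
  pose proof (ee_lt1 W HD Hne) as He1.
  assert (Hu : 0 < cf_tail W tau < 1) by (split; [apply cf_pos|apply cf_lt1]; auto).
  set (u := cf_tail W tau) in *.
  assert (Hau : a = / (1 + u)) by (rewrite Ha; reflexivity).
  assert (Ha1 : 1/2 < a < 1).
  { rewrite Hau. split.
    - replace (1/2) with (/ 2) by field. apply Rinv_lt_contravar; lra.
    - rewrite <- Rinv_1. apply Rinv_lt_contravar; lra. }
  assert (Htu : tau < u) by (apply ee_lt; auto; lra).
  assert (Hcmp : a < cf_tail (1%nat :: nil) tau).
  { rewrite Hau. simpl. apply Rinv_lt_contravar; [nra|lra]. }
  assert (Hcond : forall i, (1 <= i < length W)%nat -> cf_tail (1%nat :: skipn i W) tau <= a).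
  { intros i Hi. specialize (Hk i Hi). rewrite cf_tail_cons. simpl. rewrite Hau.
    pose proof (cf_pos (skipn i W) tau (Dg_skipn' i W HD) Ht).
    apply Rinv_le_contravar; [lra|]. simpl. lra. }
  split.
  - rewrite Ha at 2. apply (orbit a tau Ha1 ltac:(lra) Hcmp Hta (length W)); auto.
  - destruct W as [|w W']; [congruence|].
    apply Dg_cons in HD as [Hw HW'].
    rewrite snd_sum_alt1.
    assert (E : 1 - a = cf_tail ((w + 1)%nat :: W') tau).
    { rewrite Hau. unfold u. rewrite !cf_tail_cons. rewrite plus_INR. simpl.
      pose proof (cf_pos W' tau HW' Ht). pose proof (INR_ge1 w Hw).
      assert (0 < / (INR w + cf_tail W' tau)) by (apply Rinv_0_lt_compat; lra).
      field. repeat split; lra. }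
    rewrite E. apply (orbit a tau Ha1 ltac:(lra) Hcmp Hta (length W')); auto; try lia.
    intros i Hi. apply (Hcond (S i)). simpl. lia.
Qed.

Lemma nat_frac_eq m n x z : 0 <= x < 1 -> 0 <= z < 1 -> INR m + x = INR n + z -> m = n /\ x = z.
Proof.
  intros Hx Hz E. assert (F : flo (INR m + x) = flo (INR n + z)) by (rewrite E; reflexivity).
  rewrite !flo_nat in F by auto. apply INR_eq in F. subst. split; auto. lra.
Qed.

Lemma extract V U y t : Dg V -> Dg U -> 0 <= y < 1 -> 0 < t < 1 -> (length V <= length U)%nat ->
  cf_tail V y = cf_tail U t -> exists U2, U = V ++ U2 /\ y = cf_tail U2 t.
Proof.
  revert U. induction V as [|v V IH]; intros U HV HU Hy Ht Hl E.
  - exists U. split; auto.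
  - destruct U as [|u U]; simpl in Hl; [lia|].
    apply Dg_cons in HV as [Hv HV]. apply Dg_cons in HU as [Hu HU].
    rewrite !cf_tail_cons in E.
    pose proof (cf_le1' V y HV ltac:(lra)) as HA.
    assert (HB : 0 < cf_tail U t < 1).
    { split. apply cf_pos; auto; lra. destruct U as [|u' U']. simpl; lra. apply cf_lt1; auto; [congruence|lra]. }
    pose proof (INR_ge1 v Hv). pose proof (INR_ge1 u Hu).
    assert (E' : INR v + cf_tail V y = INR u + cf_tail U t).
    { rewrite <- (Rinv_inv (INR v + _)), <- (Rinv_inv (INR u + _)). rewrite E. reflexivity. }
    destruct (Req_dec (cf_tail V y) 1) as [A1|A1].
    + exfalso. rewrite A1 in E'. replace (INR v + 1) with (INR (v + 1) + 0) in E' by (rewrite plus_INR; simpl; ring).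
      apply nat_frac_eq in E'; lra.
    + apply nat_frac_eq in E' as [-> E'']; [|lra|lra].
      destruct (IH U HV HU Hy Ht ltac:(lia) E'') as [U2 [-> HU2]].
      exists U2. split; auto.
Qed.

Fixpoint rep (n : nat) (R : list nat) : list nat :=
  match n with O => nil | S n => R ++ rep n R end.

Lemma rep_snoc n R : rep n R ++ R = R ++ rep n R.
Proof. induction n; simpl. rewrite app_nil_r; auto. rewrite <- app_assoc, IHn. auto. Qed.

Lemma rep_length n R : length (rep n R) = (n * length R)%nat.
Proof. induction n; simpl; auto. rewrite length_app, IHn. lia. Qed.

Lemma rep_Dg n R : Dg R -> Dg (rep n R).
Proof. intro H. induction n; simpl. constructor. apply Dg_app; auto. Qed.

Lemma rep_fix n R x : cf_tail R x = x -> cf_tail (rep n R) x = x.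
Proof. intro H. induction n; simpl; auto. rewrite cf_tail_app, IHn. auto. Qed.

Lemma rep_ne n R : R <> nil -> (1 <= n)%nat -> rep n R <> nil.
Proof. intros H Hn. destruct n; [lia|]. simpl. destruct R; simpl; congruence. Qed.

Lemma ee_rep n R : Dg R -> R <> nil -> (1 <= n)%nat -> ee (rep n R) = ee R.
Proof.
  intros HD Hne Hn. symmetry. apply ee_unique; auto using rep_Dg, rep_ne.
  left; apply ee_pos; auto. apply rep_fix, ee_fix; auto.
Qed.

Lemma period_lemma : forall n R V Q, (length V <= n)%nat -> R ++ V = V ++ Q -> length R = length Q ->
  (1 <= length R)%nat -> exists V2 j, V = V2 ++ rep j Q /\ (length V2 < length R)%nat.
Proof.
  induction n as [|n IH]; intros R V Q Hn E HRQ Hk.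
  - destruct V; simpl in Hn; [|lia]. exists nil, O. split; [reflexivity | simpl; lia].
  - destruct (Nat.lt_ge_cases (length V) (length R)) as [Hlt|Hge].
    + exists V, O. simpl. rewrite app_nil_r. auto.
    + assert (E1 : firstn (length R) (R ++ V) = firstn (length R) (V ++ Q)) by (rewrite E; auto).
      rewrite firstn_app, Nat.sub_diag, firstn_O, app_nil_r, firstn_all in E1.
      rewrite firstn_app in E1. replace (length R - length V)%nat with O in E1 by lia.
      rewrite firstn_O, app_nil_r in E1.
      set (V' := skipn (length R) V).
      assert (EV : V = R ++ V') by (unfold V'; rewrite E1 at 1; rewrite firstn_skipn; auto).
      assert (E2 : R ++ V' = V' ++ Q).
      { rewrite EV in E. rewrite <- app_assoc in E. apply app_inv_head in E. auto. }
      assert (HV' : (length V' <= n)%nat) by (rewrite EV, length_app in Hn; lia).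
      destruct (IH R V' Q HV' E2 HRQ Hk) as [V2 [j [EV2 HV2]]].
      exists V2, (S j). split; auto.
      rewrite EV, E2, EV2. simpl. rewrite <- app_assoc, rep_snoc. auto.
Qed.

Definition failk (W : list nat) (k : nat) (tau : R) : Prop :=
  (1 <= k)%nat /\ (k + 1 <= length W)%nat /\ 0 <= tau <= ee W /\
  cf_tail (skipn k W) tau < ee (firstn k W).

Lemma border_fail W R V y : Dg W -> W = R ++ V -> R <> nil -> V <> nil ->
  0 < y < 1 -> cf_tail V y = cf_tail W y -> y < ee W ->
  exists k', (1 <= k')%nat /\ (k' < length R)%nat /\ failk W k' (ee W).
Proof.
  intros HD EW HR HV Hy E Hye.
  assert (HDR : Dg R) by (rewrite EW in HD; apply Dg_app in HD; tauto).
  assert (HDV : Dg V) by (rewrite EW in HD; apply Dg_app in HD; tauto).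
  assert (HWne : W <> nil) by (rewrite EW; destruct R; simpl; congruence).
  assert (Hlen : (length V <= length W)%nat) by (rewrite EW, length_app; lia).
  destruct (extract V W y y HDV HD ltac:(lra) Hy Hlen E) as [Q [EQ Hq]].
  assert (HDQ : Dg Q) by (rewrite EQ in HD; apply Dg_app in HD; tauto).
  assert (HlQ : length Q = length R).
  { assert (length W = length W) by reflexivity. rewrite EQ in H at 1. rewrite EW in H at 1.
    rewrite !length_app in H. lia. }
  assert (HQne : Q <> nil) by (intro; subst Q; destruct R; simpl in HlQ; [congruence|lia]).
  assert (HyQ : y = ee Q) by (apply ee_unique; auto; lra).
  assert (ERV : R ++ V = V ++ Q) by (rewrite <- EW; auto).
  assert (Hk : (1 <= length R)%nat) by (destruct R; simpl; [congruence|lia]).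
  destruct (period_lemma (length V) R V Q (le_n _) ERV ltac:(lia) Hk) as [V2 [j [EV2 HV2]]].
  assert (EW2 : W = V2 ++ rep (S j) Q).
  { rewrite EQ, EV2. simpl. rewrite <- app_assoc, rep_snoc. auto. }
  assert (HZ : ee (rep (S j) Q) = ee Q) by (apply ee_rep; auto; lia).
  assert (HZD : Dg (rep (S j) Q)) by (apply rep_Dg; auto).
  assert (HZne : rep (S j) Q <> nil) by (apply rep_ne; auto; lia).
  pose proof (ee_pos W HD HWne). pose proof (ee_lt1 W HD HWne).
  destruct V2 as [|v V2'].
  - exfalso. simpl in EW2. assert (ee W = ee Q).
    { rewrite EW2; auto. }
    lra.
  - set (V2 := v :: V2') in *.
    assert (HDV2 : Dg V2) by (rewrite EW2 in HD; apply Dg_app in HD; tauto).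
    exists (length V2). split; [simpl; lia|]. split; [auto|].
    assert (Ef : firstn (length V2) W = V2) by (rewrite EW2, firstn_app, Nat.sub_diag, firstn_O, app_nil_r, firstn_all; auto).
    assert (Es : skipn (length V2) W = rep (S j) Q) by (rewrite EW2, skipn_app, Nat.sub_diag, skipn_all; auto).
    unfold failk. rewrite Ef, Es. split; [simpl; lia|]. split.
    { rewrite EW2, length_app. assert (length (rep (S j) Q) >= 1)%nat by (destruct (rep (S j) Q); [congruence|simpl; lia]). lia. }
    split; [lra|].
    set (z := cf_tail (rep (S j) Q) (ee W)).
    assert (Hz0 : 0 <= z) by (apply cf_nonneg; auto; lra).
    assert (Hz : z < ee W).
    { unfold z. apply ee_gt; auto; lra. }
    assert (HWz : ee W = cf_tail V2 z).
    { unfold z. rewrite <- cf_tail_app, <- EW2. symmetry. apply ee_fix; auto. }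
    apply ee_lt; auto. unfold V2; congruence. lra.
Qed.

Lemma core W Ws R V Vs tau0 : Dg W -> Dg Ws -> W = R ++ V -> Ws = R ++ Vs ->
  R <> nil -> V <> nil -> Vs <> nil -> cf_tail V 0 = cf_tail Vs 0 ->
  0 <= tau0 <= ee W -> cf_tail V tau0 < ee R ->
  (forall k' t, (k' < length R)%nat -> ~ failk W k' t) ->
  (forall k' t, (k' < length R)%nat -> ~ failk Ws k' t) ->
  cf_tail V (ee W) <= ee R /\ cf_tail Vs (ee Ws) <= ee R.
Proof.
  intros HW HWs EW EWs HR HV HVs E0 Ht0 Hf NF NFs.
  assert (HDR : Dg R) by (rewrite EW in HW; apply Dg_app in HW; tauto).
  assert (HDV : Dg V) by (rewrite EW in HW; apply Dg_app in HW; tauto).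
  assert (HDVs : Dg Vs) by (rewrite EWs in HWs; apply Dg_app in HWs; tauto).
  assert (HWne : W <> nil) by (rewrite EW; destruct R; simpl; congruence).
  assert (HWsne : Ws <> nil) by (rewrite EWs; destruct R; simpl; congruence).
  pose proof (ee_pos W HW HWne). pose proof (ee_lt1 W HW HWne).
  pose proof (ee_pos Ws HWs HWsne). pose proof (ee_lt1 Ws HWs HWsne).
  pose proof (ee_pos R HDR HR) as HeR.
  assert (HRfix : cf_tail R (ee R) = ee R) by (apply ee_fix; auto).
  assert (Bd : forall X Y y, Dg X -> X = R ++ Y -> Y <> nil -> 0 < y < 1 -> y < ee X ->
             cf_tail Y y = ee R -> (forall k' t, (k' < length R)%nat -> ~ failk X k' t) -> False).
  { intros X Y y HX EX HY Hy Hyx EY NFX.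
    assert (E' : cf_tail Y y = cf_tail X y) by (rewrite EX, cf_tail_app, EY; auto).
    destruct (border_fail X R Y y HX EX HR HY Hy E' Hyx) as [k' [Hk1 [Hk2 Hk3]]].
    apply (NFX k' (ee X) Hk2 Hk3). }
  split.
  - destruct (Rle_dec (cf_tail V (ee W)) (ee R)) as [h|h]; auto. exfalso.
    apply Rnot_le_lt in h.
    destruct (Req_dec tau0 (ee W)) as [h0|h0]; [subst; lra|].
    destruct (cf_ivt V tau0 (ee W) (ee R) HDV ltac:(lra) ltac:(lra) ltac:(unfold btw; lra)) as [y [Hy Ey]].
    apply (Bd W V y HW EW HV ltac:(lra) ltac:(lra) Ey NF).
  - destruct (Rle_dec (cf_tail Vs (ee Ws)) (ee R)) as [h|h]; auto. exfalso.
    apply Rnot_le_lt in h.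
    destruct (Rtotal_order (cf_tail V 0) (ee R)) as [h1|[h1|h1]].
    + destruct (cf_ivt Vs 0 (ee Ws) (ee R) HDVs ltac:(lra) ltac:(lra) ltac:(unfold btw; lra)) as [y [Hy Ey]].
      apply (Bd Ws Vs y HWs EWs HVs ltac:(lra) ltac:(lra) Ey NFs).
    + set (N := length V).
      assert (HN : (length V <= length (rep N R))%nat).
      { rewrite rep_length. assert (1 <= length R)%nat by (destruct R; simpl; [congruence|lia]). unfold N. nia. }
      assert (Er : cf_tail (rep N R) (ee R) = ee R) by (apply rep_fix; auto).
      destruct (extract V (rep N R) 0 (ee R) HDV (rep_Dg N R HDR) ltac:(lra) ltac:(pose proof (ee_lt1 R HDR HR); lra) HN
        ltac:(rewrite Er; auto)) as [U2 [EU HU2]].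
      assert (HDU2 : Dg U2).
      { pose proof (rep_Dg N R HDR) as K. rewrite EU in K. apply Dg_app in K. tauto. }
      pose proof (cf_pos U2 (ee R) HDU2 HeR). lra.
    + destruct (Req_dec tau0 0) as [h0|h0]; [subst; lra|].
      destruct (cf_ivt V 0 tau0 (ee R) HDV ltac:(lra) ltac:(lra) ltac:(unfold btw; lra)) as [y [Hy Ey]].
      apply (Bd W V y HW EW HV ltac:(lra) ltac:(lra) Ey NF).
Qed.

Lemma valid_decomp l : valid_cf l -> exists p x, l = p ++ (x :: nil) /\ (2 <= x)%nat /\ Dg p /\
  alt_cf l = p ++ ((x - 1)%nat :: 1%nat :: nil).
Proof.
  intros [Hne [HF Hl]].
  exists (removelast l), (last l 0%nat).
  assert (E : l = removelast l ++ (last l 0%nat :: nil)) by (apply app_removelast_last; auto).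
  split; auto. split; auto. split.
  - unfold Dg. rewrite E in HF. apply List.Forall_app in HF. tauto.
  - reflexivity.
Qed.

Lemma valid_Dg l : valid_cf l -> Dg l.
Proof. intros [_ [H _]]. exact H. Qed.
Lemma valid_ne l : valid_cf l -> l <> nil.
Proof. intros [H _]. exact H. Qed.

Lemma alt_Dg p x : Dg p -> (2 <= x)%nat -> Dg (p ++ ((x - 1)%nat :: 1%nat :: nil)).
Proof. intros. apply Dg_app. split; auto. repeat constructor; lia. Qed.

Lemma alt_val0 p x : (2 <= x)%nat -> cf_tail (p ++ ((x - 1)%nat :: 1%nat :: nil)) 0 = cf_tail (p ++ (x :: nil)) 0.
Proof.
  intro Hx. rewrite !cf_tail_app. f_equal. simpl. rewrite minus_INR by lia. simpl.
  assert (2 <= INR x) by (apply le_INR in Hx; simpl in Hx; lra). field. lra.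
Qed.

Lemma valid_cons_tail a r : valid_cf (a :: r) -> r <> nil -> valid_cf r.
Proof.
  intros [_ [HF Hl]] Hr. split; auto. inversion HF; subst. split; auto.
  destruct r; [congruence|]. exact Hl.
Qed.

Lemma valid_fin01 l : valid_cf l -> 0 < cf_fin l < 1.
Proof.
  induction l as [|a r IH]; intro Hv; [destruct Hv; congruence|].
  destruct Hv as [Hne [HF Hl]]. inversion HF; subst.
  pose proof (INR_ge1 a H1).
  unfold cf_fin. rewrite cf_tail_cons.
  destruct r as [|b r'].
  - simpl in Hl. simpl. rewrite Rplus_0_r. assert (2 <= INR a) by (apply le_INR in Hl; simpl in Hl; lra).
    split. apply Rinv_0_lt_compat; lra. rewrite <- Rinv_1. apply Rinv_lt_contravar; lra.
  - assert (Hv' : valid_cf (b :: r')) by (apply (valid_cons_tail a); [split; auto|congruence]).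
    specialize (IH Hv'). unfold cf_fin in IH.
    split. apply Rinv_0_lt_compat; lra. rewrite <- Rinv_1. apply Rinv_lt_contravar; lra.
Qed.

Lemma valid_unique l1 l2 : valid_cf l1 -> valid_cf l2 -> cf_fin l1 = cf_fin l2 -> l1 = l2.
Proof.
  revert l2. induction l1 as [|a r1 IH]; intros l2 H1 H2 E; [destruct H1; congruence|].
  destruct l2 as [|b r2]; [destruct H2; congruence|].
  assert (Ha : (1 <= a)%nat) by (destruct H1 as [_ [HF _]]; inversion HF; auto).
  assert (Hb : (1 <= b)%nat) by (destruct H2 as [_ [HF _]]; inversion HF; auto).
  assert (F : forall c r, valid_cf (c :: r) -> 0 <= cf_fin r < 1 /\ (cf_fin r = 0 <-> r = nil)).
  { intros c r Hv. destruct r as [|d r]. unfold cf_fin; simpl; split; [lra|tauto].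
    pose proof (valid_fin01 (d :: r) (valid_cons_tail c _ Hv ltac:(congruence))). split; [lra|].
    split; intro h; [lra|congruence]. }
  destruct (F a r1 H1) as [A1 A2]. destruct (F b r2 H2) as [B1 B2].
  unfold cf_fin in E. rewrite !cf_tail_cons in E.
  assert (E' : INR a + cf_fin r1 = INR b + cf_fin r2).
  { pose proof (INR_ge1 a Ha). pose proof (INR_ge1 b Hb). unfold cf_fin.
    rewrite <- (Rinv_inv (INR a + _)), <- (Rinv_inv (INR b + _)). rewrite E. reflexivity. }
  apply nat_frac_eq in E' as [Hab E'']; auto. subst b.
  destruct r1 as [|c r1]; destruct r2 as [|d r2]; auto.
  - exfalso. assert (cf_fin (d :: r2) = 0) by (rewrite <- E''; reflexivity). apply B2 in H. congruence.
  - exfalso. assert (cf_fin (c :: r1) = 0) by (rewrite E''; reflexivity). apply A2 in H. congruence.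
  - f_equal. apply IH; auto.
    + apply (valid_cons_tail a); auto; congruence.
    + apply (valid_cons_tail a); auto; congruence.
Qed.

Lemma Q2R0 : Q2R 0 = 0.
Proof. unfold Q2R. simpl. ring. Qed.

Lemma is_rat_cf l : is_rat (cf_fin l).
Proof.
  induction l as [|a l IH].
  - exists 0%Q. unfold cf_fin. simpl. apply Q2R0.
  - destruct IH as [q Hq]. unfold cf_fin in *. rewrite cf_tail_cons.
    destruct (Qeq_dec (inject_Z (Z.of_nat a) + q) 0) as [Z|Z].
    + exists 0%Q. rewrite Q2R0. rewrite <- Hq. replace (INR a) with (Q2R (inject_Z (Z.of_nat a))).
      rewrite <- Q2R_plus. rewrite (Qeq_eqR _ _ Z). rewrite Q2R0. rewrite Rinv_0. auto.
      unfold Q2R. simpl. rewrite Rinv_1, Rmult_1_r. symmetry. apply INR_IZR_INZ.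
    + exists (/ (inject_Z (Z.of_nat a) + q))%Q. rewrite Q2R_inv by auto. rewrite Q2R_plus, Hq.
      f_equal. f_equal. unfold Q2R. simpl. rewrite Rinv_1, Rmult_1_r. symmetry. apply INR_IZR_INZ.
Qed.

Lemma gold_prop : 0 < gold /\ gold * gold + gold = 1 /\ gold < 1 /\ 1/2 < gold.
Proof.
  unfold gold. assert (H5 : sqrt 5 * sqrt 5 = 5) by (apply sqrt_sqrt; lra).
  assert (H0 : 0 <= sqrt 5) by apply sqrt_pos.
  assert (2 < sqrt 5) by nra. assert (sqrt 5 < 3) by nra.
  repeat split; try lra.
Qed.

Lemma Dg1 : Dg (1%nat :: nil).
Proof. repeat constructor. Qed.

Lemma ee_one : ee (1%nat :: nil) = gold.
Proof.
  destruct gold_prop as (G1 & G2 & G3 & G4).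
  symmetry. apply ee_unique; [apply Dg1|congruence|lra|].
  simpl. apply (Rmult_eq_reg_l (1 + gold)); [|lra]. rewrite Rinv_r by lra. lra.
Qed.

Lemma ee_oneone : ee (1%nat :: 1%nat :: nil) = gold.
Proof.
  destruct gold_prop as (G1 & G2 & G3 & G4).
  symmetry. apply ee_unique; [repeat constructor|congruence|lra|].
  pose proof (ee_fix (1%nat :: nil) Dg1 ltac:(congruence)) as F. rewrite ee_one in F.
  change (cf_tail (1%nat :: 1%nat :: nil) gold) with (cf_tail (1%nat :: nil) (cf_tail (1%nat :: nil) gold)).
  rewrite F, F. auto.
Qed.

Lemma qint_one t : qint 1 t <-> gold < t < 1.
Proof. unfold qint. destruct (Req_EM_T 1 1); [tauto|congruence]. Qed.

Lemma valid_alt_facts l : valid_cf l -> Dg (alt_cf l) /\ alt_cf l <> nil /\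
  cf_fin (alt_cf l) = cf_fin l /\ length (alt_cf l) = S (length l).
Proof.
  intro Hv. destruct (valid_decomp l Hv) as [p [x [E [Hx [Hp Ea]]]]].
  rewrite Ea. split; [apply alt_Dg; auto|]. split; [destruct p; simpl; congruence|].
  split. unfold cf_fin. rewrite E. apply alt_val0; auto.
  rewrite E, !length_app. simpl. lia.
Qed.

Lemma qint_val l t : valid_cf l -> (qint (cf_fin l) t <-> btw (ee l) (ee (alt_cf l)) t).
Proof.
  intro Hv. pose proof (valid_fin01 l Hv) as H01.
  destruct (valid_alt_facts l Hv) as (HDa & Hane & _ & _).
  unfold qint. destruct (Req_EM_T (cf_fin l) 1) as [h|h]; [lra|].
  split.
  - intros [l0 [Hv0 [E0 Hb]]]. assert (l0 = l) by (apply valid_unique; auto). subst l0.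
    rewrite !cf_per_ee in Hb; auto using valid_Dg, valid_ne. apply open_between_btw; auto.
  - intro Hb. exists l. split; auto. split; auto.
    rewrite !cf_per_ee; auto using valid_Dg, valid_ne. apply open_between_btw; auto.
Qed.

Lemma btw_fin l : valid_cf l -> btw (ee l) (ee (alt_cf l)) (cf_fin l).
Proof.
  intro Hv. destruct (valid_alt_facts l Hv) as (HDa & Hane & Ef & El).
  pose proof (valid_Dg l Hv) as HD. pose proof (valid_ne l Hv) as Hne.
  pose proof (ee_pos l HD Hne) as P1. pose proof (ee_pos _ HDa Hane) as P2.
  pose proof (ee_fix l HD Hne) as F1. pose proof (ee_fix _ HDa Hane) as F2.
  destruct (cf_mono l 0 (ee l) HD ltac:(lra) P1) as [M1 M2].
  destruct (cf_mono (alt_cf l) 0 (ee (alt_cf l)) HDa ltac:(lra) P2) as [N1 N2].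
  rewrite El, Nat.even_succ, <- Nat.negb_even in N1, N2.
  unfold cf_fin in *. rewrite <- Ef.
  unfold btw. destruct (Nat.even (length l)); simpl in *.
  - specialize (M1 eq_refl). specialize (N2 eq_refl). rewrite Ef in N2. right. lra.
  - specialize (M2 eq_refl). specialize (N1 eq_refl). rewrite Ef in N1. left. lra.
Qed.

Lemma other_form R : Dg R -> R <> nil -> R <> (1%nat :: nil) ->
  exists l', valid_cf l' /\ cf_fin l' = cf_fin R /\ (ee l' = ee R \/ ee (alt_cf l') = ee R).
Proof.
  intros HD Hne H1.
  assert (E : R = removelast R ++ (last R 0%nat :: nil)) by (apply app_removelast_last; auto).
  set (q := removelast R) in *. set (c := last R 0%nat) in *.
  assert (Hq : Dg q) by (rewrite E in HD; apply Dg_app in HD; tauto).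
  assert (Hc : (1 <= c)%nat) by (rewrite E in HD; apply Dg_app in HD; destruct HD as [_ K]; inversion K; auto).
  destruct (Nat.le_gt_cases 2 c) as [Hc2|Hc2].
  - exists R. split; [split; auto|]. split; auto.
  - assert (c = 1%nat) by lia. subst c. rewrite H in E.
    destruct q as [|d q'] using rev_ind.
    + simpl in E. congruence.
    + clear IHq'. assert (Hd : (1 <= d)%nat) by (apply Dg_app in Hq; destruct Hq as [_ K]; inversion K; auto).
      assert (Hq' : Dg q') by (apply Dg_app in Hq; tauto).
      exists (q' ++ (S d :: nil)).
      assert (Hv : valid_cf (q' ++ (S d :: nil))).
      { split. destruct q'; simpl; congruence. split. apply Dg_app; split; auto. repeat constructor; lia.
        rewrite last_last. lia. }
      assert (Ea : alt_cf (q' ++ (S d :: nil)) = R).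
      { unfold alt_cf. rewrite removelast_last, last_last. rewrite E, <- app_assoc. simpl.
        rewrite ?Nat.sub_0_r. replace (S d - 1)%nat with d by lia. reflexivity. }
      split; auto. split.
      * destruct (valid_alt_facts _ Hv) as (_ & _ & Ef & _). rewrite <- Ef, Ea. auto.
      * right. rewrite Ea. auto.
Qed.

Lemma key_in R y : Dg R -> R <> nil -> 0 < y < ee R -> qint (cf_fin R) (cf_tail R y).
Proof.
  intros HD Hne Hy.
  pose proof (ee_fix R HD Hne) as F.
  assert (B : btw (cf_fin R) (ee R) (cf_tail R y)).
  { unfold cf_fin. rewrite <- F at 1. apply cf_btw; auto; try lra. unfold btw; lra. }
  destruct (list_eq_dec Nat.eq_dec R (1%nat :: nil)) as [E1|E1].
  - subst R. unfold cf_fin in B. simpl in B. rewrite ee_one in B.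
    replace (/ (1 + 0)) with 1 in B by field.
    unfold cf_fin. simpl. replace (/ (1 + 0)) with 1 by field. apply qint_one.
    destruct gold_prop as (G1 & G2 & G3 & G4). unfold btw in B. simpl in B. lra.
  - destruct (other_form R HD Hne E1) as [l' [Hv [Ef Eor]]].
    rewrite <- Ef. apply qint_val; auto.
    pose proof (btw_fin l' Hv) as Bl. rewrite Ef in Bl.
    unfold btw in *. destruct Eor as [E|E]; rewrite E in *; lra.
Qed.

Lemma contain l R u1 u2 : valid_cf l -> Dg R -> R <> nil ->
  0 < u1 <= ee R -> 0 < u2 <= ee R ->
  ee l = cf_tail R u1 -> ee (alt_cf l) = cf_tail R u2 -> ~ in_calR (cf_fin l).
Proof.
  intros Hv HD Hne Hu1 Hu2 E1 E2 [Hq Hmax].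
  assert (Hqb : quad_dom (cf_fin R)).
  { split. apply is_rat_cf. split. apply cf_pos_ne; auto; lra. apply cf_le1; auto; lra. }
  assert (Sub : forall t, qint (cf_fin l) t -> qint (cf_fin R) t).
  { intros t Ht. apply qint_val in Ht; auto. rewrite E1, E2 in Ht.
    destruct (Rtotal_order u1 u2) as [h|[h|h]].
    - destruct (cf_ivt R u1 u2 t HD ltac:(lra) h Ht) as [y [Hy <-]]. apply key_in; auto; lra.
    - subst. unfold btw in Ht. lra.
    - destruct (cf_ivt R u2 u1 t HD ltac:(lra) h (btw_sym _ _ _ Ht)) as [y [Hy <-]]. apply key_in; auto; lra. }
  set (u0 := Rmin u1 u2 / 2).
  assert (Hu0 : 0 < u0 < Rmin u1 u2).
  { unfold u0. unfold Rmin. destruct (Rle_dec u1 u2); lra. }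
  assert (Hin : qint (cf_fin R) (cf_tail R u0)).
  { apply key_in; auto. unfold Rmin in Hu0. destruct (Rle_dec u1 u2); lra. }
  pose proof (Hmax (cf_fin R) Hqb Sub (cf_tail R u0) Hin) as Ha.
  apply qint_val in Ha; auto. rewrite E1, E2 in Ha.
  apply cf_btw in Ha; auto; try lra.
  unfold btw, Rmin in *. destruct (Rle_dec u1 u2); lra.
Qed.

Lemma ones_decomp l : Dg l -> (exists x, In x l /\ (2 <= x)%nat) ->
  exists i d rest, l = repeat 1%nat i ++ d :: rest /\ (2 <= d)%nat.
Proof.
  induction l as [|a l IH]; intros HD [x [Hx H2]]; [destruct Hx|].
  apply Dg_cons in HD as [Ha HD].
  destruct (Nat.le_gt_cases 2 a) as [h|h].
  - exists O, a, l. auto.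
  - assert (a = 1%nat) by lia. subst a.
    destruct Hx as [Hx|Hx]; [lia|].
    destruct (IH HD (ex_intro _ x (conj Hx H2))) as [i [d [rest [E Hd]]]].
    exists (S i), d, rest. rewrite E. auto.
Qed.

Lemma rep_one i : rep i (1%nat :: nil) = repeat 1%nat i.
Proof. induction i; simpl; auto. rewrite IHi. auto. Qed.

Lemma ee_ones i : (1 <= i)%nat -> ee (repeat 1%nat i) = gold.
Proof. intro Hi. rewrite <- rep_one, ee_rep; auto using Dg1. apply ee_one. congruence. Qed.

Lemma lead_one l : valid_cf l -> hd 0%nat l = 1%nat -> exists i, failk l i 0.
Proof.
  intros Hv Hh. pose proof (valid_Dg l Hv) as HD. pose proof (valid_ne l Hv) as Hne.
  destruct Hv as [_ [_ Hl]].
  destruct (ones_decomp l HD) as [i [d [rest [E Hd]]]].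
  { exists (last l 0%nat). split; auto. rewrite (app_removelast_last 0%nat Hne) at 2. apply in_or_app. right. left. reflexivity. }
  assert (Hi : (1 <= i)%nat) by (destruct i; [rewrite E in Hh; simpl in Hh; lia|lia]).
  exists i. unfold failk.
  assert (Ef : firstn i l = repeat 1%nat i).
  { rewrite E, firstn_app, repeat_length, Nat.sub_diag, firstn_O, app_nil_r, firstn_all2; auto. rewrite repeat_length; lia. }
  assert (Es : skipn i l = d :: rest).
  { rewrite E, skipn_app, repeat_length, Nat.sub_diag. rewrite skipn_all2 by (rewrite repeat_length; lia). auto. }
  rewrite Ef, Es, ee_ones by auto.
  split; auto. split. rewrite E, length_app, repeat_length. simpl. lia.
  split. pose proof (ee_pos l HD Hne). lra.
  destruct gold_prop as (G1 & G2 & G3 & G4).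
  assert (HDr : Dg rest) by (rewrite E in HD; apply Dg_app in HD; destruct HD as [_ K]; apply Dg_cons in K; tauto).
  pose proof (cf_le_first d rest 0 ltac:(lia) HDr ltac:(lra)).
  assert (2 <= INR d) by (apply le_INR in Hd; simpl in Hd; lra).
  assert (/ INR d <= / 2) by (apply Rinv_le_contravar; lra). lra.
Qed.

Lemma firstn_pre {A} k (p z : list A) : (k <= length p)%nat -> firstn k (p ++ z) = firstn k p.
Proof. intro H. rewrite firstn_app. replace (k - length p)%nat with O by lia. rewrite firstn_O, app_nil_r. auto. Qed.
Lemma skipn_pre {A} k (p z : list A) : (k <= length p)%nat -> skipn k (p ++ z) = skipn k p ++ z.
Proof. intro H. rewrite skipn_app. replace (k - length p)%nat with O by lia. auto. Qed.

Lemma ee_le_half W : Dg W -> W <> nil -> (2 <= hd 0%nat W)%nat -> ee W <= 1/2.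
Proof.
  intros HD Hne Hh. destruct W as [|w W']; [congruence|]. simpl in Hh.
  rewrite <- ee_fix by auto. apply Dg_cons in HD as [Hw HW'].
  pose proof (ee_pos (w :: W') ltac:(repeat constructor; auto) Hne).
  eapply Rle_trans. apply cf_le_first; auto; lra.
  assert (2 <= INR w) by (apply le_INR in Hh; simpl in Hh; lra).
  replace (1/2) with (/ 2) by field. apply Rinv_le_contravar; lra.
Qed.

Theorem no_fail l : valid_cf l -> in_calR (cf_fin l) ->
  forall k tau, ~ failk l k tau /\ ~ failk (alt_cf l) k tau.
Proof.
  intros Hv Hc k. induction k as [k IH] using (well_founded_induction Wf_nat.lt_wf). intro tau.
  pose proof Hv as Hv'. destruct (valid_decomp l Hv') as [p [x [El [Hx [Hp Ea]]]]].
  pose proof (valid_Dg l Hv) as HD. pose proof (valid_ne l Hv) as Hne.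
  destruct (valid_alt_facts l Hv) as (HDa & Hane & Efa & Ela).
  assert (Hx' : (1 <= x - 1)%nat) by lia.
  assert (Gen : forall W Ws Z Zs, W = p ++ Z -> Ws = p ++ Zs -> Dg W -> Dg Ws -> Z <> nil -> Zs <> nil ->
            cf_tail Z 0 = cf_tail Zs 0 ->
            ((W = l /\ Ws = alt_cf l) \/ (W = alt_cf l /\ Ws = l)) ->
            (1 <= k <= length p)%nat -> ~ failk W k tau).
  { intros W Ws Z Zs EW EWs HW HWs HZ HZs EZ Wcase Hk [_ [_ [Ht Hf]]].
    set (R := firstn k p). set (V := skipn k p ++ Z). set (Vs := skipn k p ++ Zs).
    assert (HR : R <> nil).
    { intro h. assert (length R = k) by (unfold R; rewrite length_firstn; lia). rewrite h in H. simpl in H. lia. }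
    assert (ER : firstn k W = R) by (rewrite EW; apply firstn_pre; lia).
    assert (EV : skipn k W = V) by (rewrite EW; apply skipn_pre; lia).
    assert (EW' : W = R ++ V) by (unfold R, V; rewrite app_assoc, firstn_skipn; auto).
    assert (EWs' : Ws = R ++ Vs) by (unfold R, Vs; rewrite app_assoc, firstn_skipn; auto).
    assert (HV : V <> nil) by (unfold V; destruct (skipn k p); simpl; [auto|congruence]).
    assert (HVs : Vs <> nil) by (unfold Vs; destruct (skipn k p); simpl; [auto|congruence]).
    assert (E0 : cf_tail V 0 = cf_tail Vs 0) by (unfold V, Vs; rewrite !cf_tail_app, EZ; auto).
    rewrite ER, EV in Hf.
    assert (HlR : length R = k) by (unfold R; rewrite length_firstn; lia).
    assert (NF : forall k' t, (k' < length R)%nat -> ~ failk W k' t).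
    { intros k' t Hk'. rewrite HlR in Hk'. destruct (IH k' Hk' t) as [A B].
      destruct Wcase as [[-> ->]|[-> ->]]; auto. }
    assert (NFs : forall k' t, (k' < length R)%nat -> ~ failk Ws k' t).
    { intros k' t Hk'. rewrite HlR in Hk'. destruct (IH k' Hk' t) as [A B].
      destruct Wcase as [[-> ->]|[-> ->]]; auto. }
    destruct (core W Ws R V Vs tau HW HWs EW' EWs' HR HV HVs E0 Ht Hf NF NFs) as [C1 C2].
    assert (HDR : Dg R) by (rewrite EW' in HW; apply Dg_app in HW; tauto).
    assert (HDV : Dg V) by (rewrite EW' in HW; apply Dg_app in HW; tauto).
    assert (HDVs : Dg Vs) by (rewrite EWs' in HWs; apply Dg_app in HWs; tauto).
    assert (HWne : W <> nil) by (rewrite EW'; destruct R; simpl; congruence).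
    assert (HWsne : Ws <> nil) by (rewrite EWs'; destruct R; simpl; congruence).
    pose proof (ee_pos W HW HWne). pose proof (ee_pos Ws HWs HWsne).
    assert (P1 : 0 < cf_tail V (ee W)) by (apply cf_pos; auto).
    assert (P2 : 0 < cf_tail Vs (ee Ws)) by (apply cf_pos; auto).
    assert (F1 : ee W = cf_tail R (cf_tail V (ee W))) by (rewrite <- cf_tail_app, <- EW'; symmetry; apply ee_fix; auto).
    assert (F2 : ee Ws = cf_tail R (cf_tail Vs (ee Ws))) by (rewrite <- cf_tail_app, <- EWs'; symmetry; apply ee_fix; auto).
    destruct Wcase as [[-> ->]|[-> ->]].
    - apply (contain l R _ _ Hv HDR HR (conj P1 C1) (conj P2 C2) F1 F2 Hc).
    - apply (contain l R _ _ Hv HDR HR (conj P2 C2) (conj P1 C1) F2 F1 Hc). }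
  assert (EZ : cf_tail (x :: nil) 0 = cf_tail ((x - 1)%nat :: 1%nat :: nil) 0).
  { pose proof (alt_val0 nil x Hx). simpl in H. simpl. auto. }
  split.
  - intro F. pose proof F as [Hk1 [Hk2 _]]. rewrite El, length_app in Hk2. simpl in Hk2.
    apply (Gen l (alt_cf l) (x :: nil) ((x - 1)%nat :: 1%nat :: nil) El Ea HD HDa ltac:(congruence) ltac:(congruence) EZ
      (or_introl (conj eq_refl eq_refl)) ltac:(lia) F).
  - intro F. pose proof F as [Hk1 [Hk2 [Ht Hf]]]. rewrite Ea, length_app in Hk2. simpl in Hk2.
    destruct (Nat.le_gt_cases k (length p)) as [Hkp|Hkp].
    + apply (Gen (alt_cf l) l ((x - 1)%nat :: 1%nat :: nil) (x :: nil) Ea El HDa HD ltac:(congruence) ltac:(congruence) (eq_sym EZ)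
        (or_intror (conj eq_refl eq_refl)) ltac:(lia) F).
    + assert (k = S (length p)) by lia. subst k.
      rewrite Ea in Hf.
      replace (firstn (S (length p)) (p ++ (x - 1)%nat :: 1%nat :: nil)) with (p ++ ((x - 1)%nat :: nil)) in Hf.
      2:{ rewrite firstn_app, firstn_all2 by lia. replace (S (length p) - length p)%nat with 1%nat by lia. reflexivity. }
      replace (skipn (S (length p)) (p ++ (x - 1)%nat :: 1%nat :: nil)) with (1%nat :: nil) in Hf.
      2:{ rewrite skipn_app, skipn_all2 by lia. replace (S (length p) - length p)%nat with 1%nat by lia. reflexivity. }
      set (R := p ++ ((x - 1)%nat :: nil)) in *.
      assert (HDR : Dg R) by (apply Dg_app; split; auto; repeat constructor; lia).
      assert (HRne : R <> nil) by (unfold R; destruct p; simpl; congruence).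
      pose proof (ee_lt1 _ HDa Hane).
      assert (Hh : cf_tail (1%nat :: nil) tau > 1/2).
      { simpl. replace (1/2) with (/ 2) by field. apply Rinv_lt_contravar; lra. }
      destruct (Nat.le_gt_cases 2 (hd 0%nat R)) as [h2|h2].
      * pose proof (ee_le_half R HDR HRne h2). lra.
      * destruct p as [|a p'].
        -- simpl in h2. unfold R in *. simpl in *.
           assert (x = 2%nat) by lia. subst x. simpl in *.
           rewrite ee_one in Hf. rewrite Ea in Ht. simpl in Ht. rewrite ee_oneone in Ht.
           destruct gold_prop as (G1 & G2 & G3 & G4).
           assert (/ (1 + gold) <= / (1 + tau)) by (apply Rinv_le_contravar; lra).
           assert (/ (1 + gold) = gold) by (apply (Rmult_eq_reg_l (1 + gold)); [rewrite Rinv_r by lra; lra | lra]).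
           lra.
        -- simpl in h2. assert (a = 1%nat) by (apply Dg_cons in Hp; lia). subst a.
           destruct (lead_one l Hv ltac:(rewrite El; reflexivity)) as [i Fi].
           pose proof Fi as [_ [Hi _]]. rewrite El, length_app in Hi. simpl in Hi.
           destruct (IH i ltac:(simpl in *; lia) 0) as [A _]. apply A. auto.
Qed.

Lemma raw_cond W tau : Dg W -> (forall k, ~ failk W k tau) -> 0 <= tau <= ee W ->
  forall k, (1 <= k < length W)%nat -> cf_tail W tau <= cf_tail (skipn k W) tau.
Proof.
  intros HD NF Ht k Hk.
  set (R := firstn k W). set (V := skipn k W).
  assert (HR : R <> nil).
  { intro h. assert (length R = k) by (unfold R; rewrite length_firstn; lia). rewrite h in H. simpl in H. lia. }
  assert (HDR : Dg R) by (apply Dg_firstn; auto).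
  assert (HDV : Dg V) by (apply Dg_skipn; auto).
  assert (Hu : 0 <= cf_tail V tau) by (apply cf_nonneg; auto; lra).
  assert (Hge : ee R <= cf_tail V tau).
  { destruct (Rle_dec (ee R) (cf_tail V tau)) as [h|h]; auto. exfalso. apply (NF k).
    unfold failk. repeat split; try lia; try lra. fold R V. lra. }
  assert (EW : cf_tail W tau = cf_tail R (cf_tail V tau)).
  { unfold R, V. rewrite <- cf_tail_app, firstn_skipn. auto. }
  rewrite EW. destruct (Req_dec (ee R) (cf_tail V tau)) as [h|h].
  - rewrite <- h. rewrite ee_fix; auto. lra.
  - left. apply ee_gt; auto. lra.
Qed.

Lemma main_W W a : Dg W -> W <> nil -> (forall k tau, ~ failk W k tau) ->
  (forall tau, 0 < tau < ee W -> tau <= cf_tail (1%nat :: W) tau) ->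
  btw (cf1_per W) (cf1_fin W) a ->
  Titer a (fst (sum_alt W) + 1) a = Titer a (snd (sum_alt W) + 1) (1 - a).
Proof.
  intros HD Hne NF Hle Hb.
  assert (E1 : cf1_per W = cf_tail (1%nat :: W) (ee W)).
  { unfold cf1_per. rewrite cf_per_ee by auto. simpl. rewrite ee_fix; auto. }
  assert (E2 : cf1_fin W = cf_tail (1%nat :: W) 0) by reflexivity.
  rewrite E1, E2 in Hb. pose proof (ee_pos W HD Hne).
  assert (HD1 : Dg (1%nat :: W)) by (constructor; auto).
  destruct (cf_ivt (1%nat :: W) 0 (ee W) a HD1 ltac:(lra) H (btw_sym _ _ _ Hb)) as [tau [Ht Ea]].
  destruct (orbit_main W a tau HD Hne ltac:(lra) ltac:(lra) (eq_sym Ea)) as [O1 O2].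
  - rewrite <- Ea. apply Hle. lra.
  - apply raw_cond; auto. lra.
  - rewrite O1, O2. auto.
Qed.

Lemma sum_alt_app p z :
  fst (sum_alt (p ++ z)) = (if Nat.even (length p) then fst (sum_alt p) + fst (sum_alt z) else fst (sum_alt p) + snd (sum_alt z))%nat /\
  snd (sum_alt (p ++ z)) = (if Nat.even (length p) then snd (sum_alt p) + snd (sum_alt z) else snd (sum_alt p) + fst (sum_alt z))%nat.
Proof.
  induction p as [|a p IH].
  - simpl. auto.
  - change (length (a :: p)) with (S (length p)). rewrite Nat.even_succ, <- Nat.negb_even.
    change ((a :: p) ++ z) with (a :: (p ++ z)). cbn [sum_alt].
    destruct (sum_alt (p ++ z)) as [s1 s2] eqn:E1. destruct (sum_alt p) as [t1 t2] eqn:E2.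
    simpl fst in *. simpl snd in *. destruct IH as [I1 I2].
    destruct (Nat.even (length p)); simpl negb; cbv iota; split; lia.
Qed.

Lemma tau_le_hd W : Dg W -> W <> nil -> (2 <= hd 0%nat W)%nat ->
  forall tau, 0 < tau < ee W -> tau <= cf_tail (1%nat :: W) tau.
Proof.
  intros HD Hne Hh tau Ht. pose proof (ee_le_half W HD Hne Hh).
  rewrite cf_tail_cons. simpl INR.
  assert (cf_tail W tau <= 1) by (apply cf_le1; auto; lra).
  assert (0 <= cf_tail W tau) by (apply cf_nonneg; auto; lra).
  assert (/ 2 <= / (1 + cf_tail W tau)) by (apply Rinv_le_contravar; lra). lra.
Qed.

Lemma tau_le_11 tau : 0 < tau < gold -> tau <= cf_tail (1%nat :: 1%nat :: 1%nat :: nil) tau.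
Proof.
  intro Ht. destruct gold_prop as (G1 & G2 & G3 & G4). simpl.
  replace (/ (1 + / (1 + / (1 + tau)))) with ((2 + tau) / (3 + 2 * tau)) by (field; repeat split; try lra;
    assert (0 < / (1 + tau)) by (apply Rinv_0_lt_compat; lra); lra).
  apply Rmult_le_reg_r with (3 + 2 * tau); [lra|]. unfold Rdiv. rewrite Rmult_assoc, Rinv_l, Rmult_1_r by lra.
  nra.
Qed.

Lemma tau_le_1 tau : 0 < tau < gold -> tau <= cf_tail (1%nat :: 1%nat :: nil) tau.
Proof.
  intro Ht. destruct gold_prop as (G1 & G2 & G3 & G4). simpl.
  replace (/ (1 + / (1 + tau))) with ((1 + tau) / (2 + tau)) by (field; lra).
  apply Rmult_le_reg_r with (2 + tau); [lra|]. unfold Rdiv. rewrite Rmult_assoc, Rinv_l, Rmult_1_r by lra.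
  nra.
Qed.

Theorem theorem3p5 :
  (in_calR 1 ->
     forall alpha, 1 / 2 < alpha < gold ->
       Titer alpha (1 + 1) alpha = Titer alpha (2 - 1) (1 - alpha)) /\
  (forall l : list nat, valid_cf l -> in_calR (cf_fin l) ->
     (forall alpha, JL l alpha ->
        Titer alpha (M_of l) alpha = Titer alpha (N_of l) (1 - alpha)) /\
     (forall alpha, JR l alpha ->
        Titer alpha (M_of l + 1) alpha = Titer alpha (N_of l - 1) (1 - alpha))).
Proof.
  destruct gold_prop as (G1 & G2 & G3 & G4).
  split.
  - intros _ a Ha.
    assert (NF1 : forall k tau, ~ failk (1%nat :: nil) k tau).
    { intros k tau [Hk1 [Hk2 _]]. simpl in Hk2. lia. }
    assert (Hle : forall tau, 0 < tau < ee (1%nat :: nil) -> tau <= cf_tail (1%nat :: 1%nat :: nil) tau).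
    { intros tau Ht. rewrite ee_one in Ht. apply tau_le_1. auto. }
    assert (Hb : btw (cf1_per (1%nat :: nil)) (cf1_fin (1%nat :: nil)) a).
    { unfold cf1_per, cf1_fin, cf_fin. rewrite cf_per_ee by (auto using Dg1; congruence).
      rewrite ee_fix by (auto using Dg1; congruence). rewrite ee_one. simpl.
      replace (/ (1 + / (1 + 0))) with (1/2) by field. unfold btw. lra. }
    pose proof (main_W (1%nat :: nil) a Dg1 ltac:(congruence) NF1 Hle Hb) as M.
    simpl in M. exact M.
  - intros l Hv Hc.
    pose proof (no_fail l Hv Hc) as NF.
    pose proof (valid_Dg l Hv) as HD. pose proof (valid_ne l Hv) as Hne.
    destruct (valid_alt_facts l Hv) as (HDa & Hane & _ & _).
    assert (Hh : (2 <= hd 0%nat l)%nat).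
    { destruct l as [|a l']; [congruence|]. apply Dg_cons in HD as [Ha _]. simpl.
      destruct (Nat.eq_dec a 1) as [E|E]; [|lia]. exfalso.
      destruct (lead_one (a :: l') Hv ltac:(simpl; auto)) as [i Fi]. apply (proj1 (NF i 0)). auto. }
    destruct (valid_decomp l Hv) as [p [x [El [Hx [Hp Ea]]]]].
    assert (HWl : forall a, btw (cf1_per l) (cf1_fin l) a ->
      Titer a (fst (sum_alt l) + 1) a = Titer a (snd (sum_alt l) + 1) (1 - a)).
    { intros a Hb. apply main_W; auto.
      - intros k tau. apply (proj1 (NF k tau)).
      - apply tau_le_hd; auto. }
    assert (HWa : forall a, btw (cf1_per (alt_cf l)) (cf1_fin (alt_cf l)) a ->
      Titer a (fst (sum_alt (alt_cf l)) + 1) a = Titer a (snd (sum_alt (alt_cf l)) + 1) (1 - a)).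
    { intros a Hb. apply main_W; auto.
      - intros k tau. apply (proj2 (NF k tau)).
      - destruct p as [|b p'].
        + simpl in Ea. destruct (Nat.eq_dec x 2) as [E2|E2].
          * subst x. simpl in Ea. rewrite Ea. rewrite ee_oneone. apply tau_le_11.
          * apply tau_le_hd; auto. rewrite Ea. simpl. lia.
        + apply tau_le_hd; auto. rewrite Ea. rewrite El in Hh. simpl in *. auto. }
    destruct (sum_alt_app p (x :: nil)) as [S1 S2].
    destruct (sum_alt_app p ((x - 1)%nat :: 1%nat :: nil)) as [A1 A2].
    rewrite <- El in S1, S2. rewrite <- Ea in A1, A2.
    simpl (sum_alt (x :: nil)) in S1, S2. simpl (sum_alt ((x - 1)%nat :: 1%nat :: nil)) in A1, A2.
    simpl fst in S1, S2, A1, A2. simpl snd in S1, S2, A1, A2.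
    assert (Hodd : Nat.odd (length l) = Nat.even (length p)).
    { rewrite El, length_app. simpl. rewrite Nat.add_1_r, Nat.odd_succ. auto. }
    unfold JL, JR, M_of, N_of. rewrite Hodd.
    destruct (Nat.even (length p)) eqn:Ep.
    + split; intros a Ha; apply open_between_btw in Ha.
      * specialize (HWa a Ha).
        replace (fst (sum_alt l)) with (fst (sum_alt (alt_cf l)) + 1)%nat by lia.
        replace (snd (sum_alt l) + 2)%nat with (snd (sum_alt (alt_cf l)) + 1)%nat by lia. exact HWa.
      * specialize (HWl a (btw_sym _ _ _ Ha)).
        replace (snd (sum_alt l) + 2 - 1)%nat with (snd (sum_alt l) + 1)%nat by lia. exact HWl.
    + split; intros a Ha; apply open_between_btw in Ha.
      * specialize (HWl a Ha). exact HWl.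
      * specialize (HWa a (btw_sym _ _ _ Ha)).
        replace (fst (sum_alt l) + 1 + 1)%nat with (fst (sum_alt (alt_cf l)) + 1)%nat by lia.
        replace (snd (sum_alt l) + 1 - 1)%nat with (snd (sum_alt (alt_cf l)) + 1)%nat by lia. exact HWa.
Qed.
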